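(* Let $q$ be a prime power, $b$ a positive integer, and $\boldsymbol{B}$ an $M\times M$ matrix with nonnegative integer entries. For any permutation $\sigma$ of $\{1,2,\ldots,M\}$, \[ N_b(\boldsymbol{B})\le\min_{r\in\mathbb{N}}\Big\{r\ :\ q^r>\max_{j\in\{1,\ldots,M\}}\sum_{i=1}^{j-1}\big|\mathcal{B}^b_r([\boldsymbol{B}]_{\sigma(i)\sigma(j)}-1)\big|\Big\}. \]
   Context: For $\boldsymbol{z}=(z_0,\ldots,z_{n-1}),\boldsymbol{w}\in\mathbb{F}_q^n$, $d_b(\boldsymbol{z},\boldsymbol{w})$ is the number of $i\in\{0,\ldots,n-1\}$ with $(z_i,\ldots,z_{i+b-1})\ne(w_i,\ldots,w_{i+b-1})$ (indices mod $n$). $\mathcal{B}^b_r(s)=\{\boldsymbol{y}\in\mathbb{F}_q^r: d_b(\boldsymbol{x},\boldsymbol{y})\le s\}$ is the $b$-symbol ball of radius $s$ around a fixed $\boldsymbol{x}\in\mathbb{F}_q^r$ (empty for $s<0$). $N_b(\boldsymbol{B})$ is the smallest $r$ such that there exist $\boldsymbol{p}_1,\ldots,\boldsymbol{p}_M\in\mathbb{F}_q^r$ (in some ordering) with $d_b(\boldsymbol{p}_i,\boldsymbol{p}_j)\ge[\boldsymbol{B}]_{ij}$ for all $i,j$.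
   Formalization: The matrix $\boldsymbol{B}$ is assumed symmetric, and in $N_b(\boldsymbol{B})$ the condition $d_b(\boldsymbol{p}_i,\boldsymbol{p}_j)\ge[\boldsymbol{B}]_{ij}$ is imposed only for i ≠ j. The statement above fails without it. *)

(* Defs.v *)
From HB Require Import structures.
From mathcomp Require Import all_boot all_order all_algebra all_fingroup.
Set Implicit Arguments. Unset Strict Implicit. Unset Printing Implicit Defensive.
Import GRing.Theory.

(* Vectors of F_q^n are n-tuples; coordinates indexed 0..n-1, read mod n. *)

Definition bwin_diff (F : finFieldType) (b n : nat) (z w : n.-tuple F) (i : nat) : bool :=
  has (fun k => nth (0%R : F) z ((i + k) %% n) != nth (0%R : F) w ((i + k) %% n)) (iota 0 b).

Definition db (F : finFieldType) (b n : nat) (z w : n.-tuple F) : nat :=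
  count (bwin_diff b z w) (iota 0 n).

(* b-symbol ball of radius s (an integer, empty if s < 0) in F^r, around the
   fixed centre x = 0 *)
Definition bball (F : finFieldType) (b r : nat) (s : int) : {set r.-tuple F} :=
  [set y : r.-tuple F | ((db b [tuple (0%R : F) | _ < r] y)%:Z <= s)%R].

Definition Nb_admissible (F : finFieldType) (b M : nat) (B : 'M[nat]_M) (r : nat) : Prop :=
  exists p : 'I_M -> r.-tuple F, forall i j : 'I_M, i != j -> B i j <= db b (p i) (p j).

Definition GV_cond (F : finFieldType) (b M : nat) (B : 'M[nat]_M) (sigma : 'S_M) (r : nat) : bool :=
  \max_(j < M) \sum_(i < M | (i < j)%N) #|bball F b r ((B (sigma i) (sigma j))%:Z - 1)%R|
    < #|F| ^ r.

(* Main.v *)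
Require Import Defs.
From HB Require Import structures.
From mathcomp Require Import all_boot all_order all_algebra all_fingroup.
From mathcomp Require Import zify.
From Stdlib Require Import Classical.
Import GRing.Theory Num.Theory.

Set Implicit Arguments. Unset Strict Implicit. Unset Printing Implicit Defensive.

Lemma card_bigcup_le (T I : finType) (P : pred I) (A : I -> {set T}) :
  #|\bigcup_(i | P i) A i| <= \sum_(i | P i) #|A i|.
Proof.
elim/big_ind2: _ => //; first by rewrite cards0.
move=> X n Y m hX hY; apply: leq_trans (leq_card_setU _ _) _; exact: leq_add.
Qed.

Definition tsub (F : finFieldType) r (y x : r.-tuple F) : r.-tuple F :=
  [tuple (tnth y k - tnth x k)%R | k < r].

Lemma nth_diff (F : finFieldType) r (x y : r.-tuple F) m :
  (nth 0%R x m != nth 0%R y m) =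
  (nth 0%R [tuple (0%R : F) | _ < r] m != nth 0%R (tsub y x) m).
Proof.
case: (ltnP m r) => hm.
  have -> : nth 0%R x m = tnth x (Ordinal hm) by rewrite (tnth_nth 0%R).
  have -> : nth 0%R y m = tnth y (Ordinal hm) by rewrite (tnth_nth 0%R).
  have -> : nth 0%R [tuple (0%R : F) | _ < r] m = tnth [tuple (0%R : F) | _ < r] (Ordinal hm)
    by rewrite (tnth_nth 0%R).
  have -> : nth 0%R (tsub y x) m = tnth (tsub y x) (Ordinal hm) by rewrite (tnth_nth 0%R).
  by rewrite !tnth_mktuple [(0%R == _)]eq_sym subr_eq0 eq_sym.
rewrite !nth_default ?size_tuple //.
Qed.

Lemma db_tsub (F : finFieldType) b r (x y : r.-tuple F) :
  db b x y = db b [tuple (0%R : F) | _ < r] (tsub y x).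
Proof.
apply: eq_count => i; apply: eq_has => k; exact: nth_diff.
Qed.

Lemma db_sym (F : finFieldType) b r (x y : r.-tuple F) : db b x y = db b y x.
Proof.
apply: eq_count => i; apply: eq_has => k /=; by rewrite eq_sym.
Qed.

Lemma tsub_inj (F : finFieldType) r (x : r.-tuple F) : injective (fun y => tsub y x).
Proof.
move=> y y' /= h; apply: eq_from_tnth => k.
have := congr1 (fun t => tnth t k) h; rewrite /tsub !tnth_mktuple.
by move/addIr.
Qed.

Lemma ball_card (F : finFieldType) b r (x : r.-tuple F) (c : nat) :
  #|[set y : r.-tuple F | db b x y < c]| <= #|bball F b r (c%:Z - 1)%R|.
Proof.
rewrite -(card_imset _ (@tsub_inj F r x)); apply: subset_leq_card.
apply/subsetP => z /imsetP [y]; rewrite inE => hy ->.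
rewrite /bball inE -db_tsub; lia.
Qed.

Lemma greedy (F : finFieldType) (b M : nat) (B : 'M[nat]_M) (sigma : 'S_M) r :
  GV_cond F b B sigma r ->
  forall n, n <= M -> exists p : nat -> r.-tuple F,
    forall i j : 'I_M, i < j -> j < n -> B (sigma i) (sigma j) <= db b (p i) (p j).
Proof.
move=> hGV; elim=> [|n IH] hn.
  by exists (fun _ => [tuple (0%R : F) | _ < r]) => i j _.
have [p hp] := IH (ltnW hn).
pose j0 := Ordinal hn.
pose Bad := \bigcup_(i < M | i < j0) [set y : r.-tuple F | db b (p i) y < B (sigma i) (sigma j0)].
have hBad : #|Bad| < #|F| ^ r.
  apply: leq_ltn_trans (card_bigcup_le _ _) _.
  apply: leq_ltn_trans hGV.
  apply: leq_trans _ (leq_bigmax j0).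
  apply: leq_sum => i _; exact: ball_card.
have : ~~ ([set: r.-tuple F] \subset Bad).
  apply/negP => /subset_leq_card h; have := leq_ltn_trans h hBad; by rewrite cardsT card_tuple ltnn.
case/subsetPn => y _ hy.
exists (fun k => if k == n then y else p k) => i j hij hj.
case: (ltnP j n) => hjn.
  rewrite (ltn_eqF hjn) (ltn_eqF (ltn_trans hij hjn)); exact: hp.
have ej : j = j0 by apply: val_inj => /=; lia.
have hin : i < n by lia.
rewrite (ltn_eqF hin) (_ : (j : nat) == n) ?ej; last by rewrite /= eqxx.
rewrite leqNgt; apply/negP => hlt; move: hy; apply/negP; rewrite negbK.
apply/bigcupP; exists i; first by rewrite /= ; lia.
by rewrite inE.
Qed.

Theorem lemma4p3 (F : finFieldType) (b M : nat) (B : 'M[nat]_M) (sigma : 'S_M) :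
  0 < b ->
  (forall i j : 'I_M, B i j = B j i) ->
  forall r0 : nat,
    GV_cond F b B sigma r0 -> (forall r, r < r0 -> ~~ GV_cond F b B sigma r) ->
    exists N : nat,
      [/\ Nb_admissible F b B N,
          (forall r, r < N -> ~ Nb_admissible F b B r) &
          N <= r0].
Proof.
move=> _ Bsym r0 hGV _.
have adm : Nb_admissible F b B r0.
  have [p hp] := greedy hGV (leqnn M).
  exists (fun k => p (sigma^-1 k)%g) => k l hkl.
  have hne : (sigma^-1 k)%g != (sigma^-1 l)%g.
    by apply: contra hkl => /eqP /perm_inj ->.
  case: (ltngtP (sigma^-1 k)%g (sigma^-1 l)%g) => h.
  - by have := hp _ _ h (ltn_ord _); rewrite !permKV.
  - by have := hp _ _ h (ltn_ord _); rewrite !permKV Bsym db_sym.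
  - by move: hne; rewrite (val_inj h) eqxx.
suff H : forall k r, r <= k -> Nb_admissible F b B r -> exists N : nat,
      [/\ Nb_admissible F b B N, (forall r, r < N -> ~ Nb_admissible F b B r) & N <= r].
  by have [N [h1 h2 h3]] := H r0 r0 (leqnn _) adm; exists N; split.
elim=> [|k IH] r hr hN.
  exists r; split => // r' hr'; lia.
case: (classic (exists r', r' < r /\ Nb_admissible F b B r')).
  move=> [r' [h1 h2]]; have [N [a c d]] := IH r' ltac:(lia) h2.
  exists N; split => //; lia.
move=> hn; exists r; split => // r' hr' hN'; apply: hn; by exists r'.
Qed.
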